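(* Let $R$ be a semiring and let $\mathrm{Mod}_R$ be the category of $R$-modules. Let $\mathfrak{M}$ be the class of normal monomorphisms and $\mathfrak{E}$ the class of normal epimorphisms in $\mathrm{Mod}_R$. Then $(\mathrm{Mod}_R,\mathfrak{M},\mathfrak{E})$ is a proto-exact category.
   Context: A semiring is a set $R$ with two commutative monoid structures $(R,+,0_R)$ and $(R,\cdot,1_R)$ such that multiplication distributes over addition (and $0_R\cdot a=0_R$). An $R$-module is a commutative monoid $(M,+,0)$ with an action $R\times M\to M$ satisfying the usual module axioms; morphisms are $R$-linear monoid maps. In $\mathrm{Mod}_R$ the zero module is a zero object. A morphism $f:M\to N$ is a normal monomorphism if it is the equalizer of some morphism $g:N\to L$ and the zero map $N\to L$; it is a normal epimorphism if it is the coequalizer of some morphism $g:L\to M$ and the zero map $L\to M$. A proto-exact category is a pointed category $\mathcal{C}$ with two classes of morphisms $\mathfrak{M}$ (admissible monomorphisms) and $\mathfrak{E}$ (admissible epimorphisms) such that: (1) for every object $A$, $0\to A$ lies in $\mathfrak{M}$ and $A\to 0$ lies in $\mathfrak{E}$; (2) $\mathfrak{M}$ and $\mathfrak{E}$ contain all isomorphisms and are closed under composition; (3) a commutative square with top $i:A\to B$, bottom $i':A'\to B'$ in $\mathfrak{M}$ and left $j:A\to A'$, right $j':B\to B'$ in $\mathfrak{E}$ is a pullback if and only if it is a pushout; (4) every pair $i':A'\to B'$ in $\mathfrak{M}$, $j':B\to B'$ in $\mathfrak{E}$ can be completed to such a square which is both a pullback and a pushout, with $i\in\mathfrak{M}$,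 $j\in\mathfrak{E}$; (5) every pair $i:A\to B$ in $\mathfrak{M}$, $j:A\to A'$ in $\mathfrak{E}$ can be completed to such a square which is both a pullback and a pushout, with $i'\in\mathfrak{M}$, $j'\in\mathfrak{E}$. *)

(* Defs.v *)
From HB Require Import structures.
From mathcomp Require Import all_boot all_algebra.
Set Implicit Arguments. Unset Strict Implicit. Unset Printing Implicit Defensive.
Import GRing.Theory.
Local Open Scope ring_scope.

(* A semiring (in the sense of the paper: both monoid structures commutative,
   0 absorbing) is a [comPzSemiRingType]; an R-module is an [lSemiModType R]
   (a commutative monoid with a semimodule action).  Morphisms of Mod_R are
   the R-linear monoid maps, represented as functions satisfying [is_hom]. *)

Section ModR.
Variable R : comPzSemiRingType.

Definition is_hom (M N : lSemiModType R) (f : M -> N) : Prop :=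
  [/\ f 0 = 0, (forall x y, f (x + y) = f x + f y)
    & (forall (r : R) x, f (r *: x) = r *: f x)].

Definition zmap (M N : lSemiModType R) : M -> N := fun _ => 0.

Definition is_zero_module (Z : lSemiModType R) : Prop := forall z : Z, z = 0.

Definition morclass := forall (M N : lSemiModType R), (M -> N) -> Prop.

Definition is_equalizer_with_zero (M N L : lSemiModType R)
    (f : M -> N) (g : N -> L) : Prop :=
  is_hom f /\ is_hom g /\ (forall x, g (f x) = 0) /\
  forall (X : lSemiModType R) (h : X -> N), is_hom h ->
    (forall x, g (h x) = 0) ->
    exists u : X -> M, [/\ is_hom u, (forall x, f (u x) = h x) &
      forall v : X -> M, is_hom v -> (forall x, f (v x) = h x) -> v =1 u].

Definition is_coequalizer_with_zero (L M N : lSemiModType R)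
    (g : L -> M) (f : M -> N) : Prop :=
  is_hom f /\ is_hom g /\ (forall x, f (g x) = 0) /\
  forall (X : lSemiModType R) (h : M -> X), is_hom h ->
    (forall x, h (g x) = 0) ->
    exists u : N -> X, [/\ is_hom u, (forall x, u (f x) = h x) &
      forall v : N -> X, is_hom v -> (forall x, v (f x) = h x) -> v =1 u].

Definition normal_mono : morclass := fun M N f =>
  exists (L : lSemiModType R) (g : N -> L), is_equalizer_with_zero f g.

Definition normal_epi : morclass := fun M N f =>
  exists (L : lSemiModType R) (g : L -> M), is_coequalizer_with_zero g f.

Definition is_iso (M N : lSemiModType R) (f : M -> N) : Prop :=
  is_hom f /\ exists g : N -> M,
    [/\ is_hom g, (forall x, g (f x) = x) & (forall y, f (g y) = y)].

(* The square
       A --i--> B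
       |j       |j'
       v        v
       A' -i'-> B'
   (assumed commutative, i.e. j' o i = i' o j). *)
Definition commutes (A B A' B' : lSemiModType R)
    (i : A -> B) (j : A -> A') (i' : A' -> B') (j' : B -> B') : Prop :=
  forall a, j' (i a) = i' (j a).

Definition is_pullback (A B A' B' : lSemiModType R)
    (i : A -> B) (j : A -> A') (i' : A' -> B') (j' : B -> B') : Prop :=
  forall (X : lSemiModType R) (p : X -> B) (q : X -> A'),
    is_hom p -> is_hom q -> (forall x, j' (p x) = i' (q x)) ->
    exists u : X -> A, [/\ is_hom u, (forall x, i (u x) = p x),
      (forall x, j (u x) = q x) &
      forall v : X -> A, is_hom v -> (forall x, i (v x) = p x) ->
        (forall x, j (v x) = q x) -> v =1 u].

Definition is_pushout (A B A' B' : lSemiModType R)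
    (i : A -> B) (j : A -> A') (i' : A' -> B') (j' : B -> B') : Prop :=
  forall (X : lSemiModType R) (p : B -> X) (q : A' -> X),
    is_hom p -> is_hom q -> (forall a, p (i a) = q (j a)) ->
    exists u : B' -> X, [/\ is_hom u, (forall b, u (j' b) = p b),
      (forall a', u (i' a') = q a') &
      forall v : B' -> X, is_hom v -> (forall b, v (j' b) = p b) ->
        (forall a', v (i' a') = q a') -> v =1 u].

Definition proto_exact (Mc Ec : morclass) : Prop :=
  (forall (Z A : lSemiModType R), is_zero_module Z ->
     Mc Z A (@zmap Z A) /\ Ec A Z (@zmap A Z)) /\
  (forall (M N : lSemiModType R) (f : M -> N), is_iso f -> Mc M N f /\ Ec M N f) /\
  (forall (M N P : lSemiModType R) (f : M -> N) (g : N -> P),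
     Mc M N f -> Mc N P g -> Mc M P (g \o f)) /\
  (forall (M N P : lSemiModType R) (f : M -> N) (g : N -> P),
     Ec M N f -> Ec N P g -> Ec M P (g \o f)) /\
  (forall (A B A' B' : lSemiModType R)
          (i : A -> B) (j : A -> A') (i' : A' -> B') (j' : B -> B'),
     Mc A B i -> Mc A' B' i' -> Ec A A' j -> Ec B B' j' ->
     commutes i j i' j' ->
     (is_pullback i j i' j' <-> is_pushout i j i' j')) /\
  (forall (A' B B' : lSemiModType R) (i' : A' -> B') (j' : B -> B'),
     Mc A' B' i' -> Ec B B' j' ->
     exists (A : lSemiModType R) (i : A -> B) (j : A -> A'),
       [/\ Mc A B i, Ec A A' j, commutes i j i' j',
           is_pullback i j i' j' & is_pushout i j i' j']) /\
  (forall (A B A' : lSemiModType R) (i : A -> B) (j : A -> A'),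
     Mc A B i -> Ec A A' j ->
     exists (B' : lSemiModType R) (i' : A' -> B') (j' : B -> B'),
       [/\ Mc A' B' i', Ec B B' j', commutes i j i' j',
           is_pullback i j i' j' & is_pushout i j i' j']).

End ModR.

(* Main.v *)
Require Import Defs.
From HB Require Import structures.
From mathcomp Require Import all_boot all_algebra.
From mathcomp Require Import boolp.
Require Import Defs.
Set Implicit Arguments. Unset Strict Implicit. Unset Printing Implicit Defensive.
Import GRing.Theory.
Local Open Scope ring_scope.

Definition closedP (R : comPzSemiRingType) (N : lSemiModType R) (P : N -> Prop) :=
  [/\ P 0, (forall x y, P x -> P y -> P (x + y)) & (forall (r : R) x, P x -> P (r *: x))].

Record subm (R : comPzSemiRingType) (N : lSemiModType R) (P : N -> Prop)
  (Hc : closedP P) := SubM { sv : N; sp : P sv }.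

Section Sub.
Variables (R : comPzSemiRingType) (N : lSemiModType R) (P : N -> Prop) (Hc : closedP P).
Local Notation S := (subm Hc).

Lemma sv_inj : injective (@sv _ _ _ Hc).
Proof.
case=> x px [y py] /= exy; subst y.
by rewrite (Prop_irrelevance px py).
Qed.

HB.instance Definition _ := gen_eqMixin S.
HB.instance Definition _ := gen_choiceMixin S.

Let P0 : P 0. Proof. by case: Hc. Qed.
Let PD x y : P x -> P y -> P (x + y). Proof. by case: Hc => _ h _; apply: h. Qed.
Let PZ (r : R) x : P x -> P (r *: x). Proof. by case: Hc => _ _ h; apply: h. Qed.

Definition sub0 : S := SubM Hc P0.
Definition subadd (a b : S) : S := SubM Hc (PD (sp a) (sp b)).
Definition subscale (r : R) (a : S) : S := SubM Hc (PZ r (sp a)).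

Lemma subaddA : associative subadd.
Proof. by move=> a b c; apply: sv_inj; rewrite /= addrA. Qed.
Lemma subaddC : commutative subadd.
Proof. by move=> a b; apply: sv_inj; rewrite /= addrC. Qed.
Lemma subadd0 : left_id sub0 subadd.
Proof. by move=> a; apply: sv_inj; rewrite /= add0r. Qed.

HB.instance Definition _ := GRing.isNmodule.Build S subaddA subaddC subadd0.

Lemma subscaleA a b v : subscale a (subscale b v) = subscale (a * b) v.
Proof. by apply: sv_inj; rewrite /= scalerA. Qed.
Lemma subscale0 v : subscale 0 v = 0.
Proof. by apply: sv_inj; rewrite /= scale0r. Qed.
Lemma subscale1 : left_id 1 subscale.
Proof. by move=> v; apply: sv_inj; rewrite /= scale1r. Qed.
Lemma subscaleDr : right_distributive subscale (@subadd).
Proof. by move=> r a b; apply: sv_inj; rewrite /= scalerDr. Qed.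
Lemma subscaleDl v : {morph subscale^~ v: a b / a + b >-> subadd a b}.
Proof. by move=> a b; apply: sv_inj; rewrite /= scalerDl. Qed.

HB.instance Definition _ := GRing.Nmodule_isLSemiModule.Build R S
  subscaleA subscale0 subscale1 subscaleDr subscaleDl.

Lemma sv_hom : is_hom (@sv _ _ _ Hc).
Proof. by split. Qed.
End Sub.

Check fun (R : comPzSemiRingType) (N : lSemiModType R) (P : N -> Prop) (Hc : closedP P) => (subm Hc : lSemiModType R).

Definition congr (R : comPzSemiRingType) (N : lSemiModType R) (E : N -> N -> Prop) :=
  [/\ (forall x, E x x), (forall x y, E x y -> E y x),
      (forall x y z, E x y -> E y z -> E x z),
      (forall x y x' y', E x x' -> E y y' -> E (x + y) (x' + y'))
    & (forall (r : R) x y, E x y -> E (r *: x) (r *: y))].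

Record quotm (R : comPzSemiRingType) (N : lSemiModType R) (E : N -> N -> Prop)
  (Hc : congr E) := QM { qp : N -> Prop; qex : exists n, qp = E n }.

Section Quot.
Variables (R : comPzSemiRingType) (N : lSemiModType R) (E : N -> N -> Prop) (Hc : congr E).
Local Notation Q := (quotm Hc).

Let Erefl x : E x x. Proof. by case: Hc. Qed.
Let Esym x y : E x y -> E y x. Proof. by case: Hc => _ h _ _ _; apply: h. Qed.
Let Etrans x y z : E x y -> E y z -> E x z. Proof. by case: Hc => _ _ h _ _; apply: h. Qed.
Let ED x y x' y' : E x x' -> E y y' -> E (x + y) (x' + y'). Proof. by case: Hc => _ _ _ h _; apply: h. Qed.
Let EZ (r : R) x y : E x y -> E (r *: x) (r *: y). Proof. by case: Hc => _ _ _ _ h; apply: h. Qed.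

Lemma qp_inj : injective (@qp _ _ _ Hc).
Proof.
case=> x px [y py] /= exy; subst y.
by rewrite (Prop_irrelevance px py).
Qed.

HB.instance Definition _ := gen_eqMixin Q.
HB.instance Definition _ := gen_choiceMixin Q.

Definition cls (n : N) : Q := QM Hc (ex_intro (fun m => E n = E m) n erefl).
Definition rep (q : Q) : N := proj1_sig (cid (qex q)).

Lemma cls_eq a b : cls a = cls b <-> E a b.
Proof.
split.
  move=> /(congr1 (@qp _ _ _ Hc)) /= h.
  by rewrite h; apply: Erefl.
move=> hab; apply: qp_inj => /=.
apply: funext => x; apply: propext; split => h.
  exact: Etrans (Esym hab) h.
exact: Etrans hab h.
Qed.

Lemma repK q : cls (rep q) = q.
Proof.
apply: qp_inj; rewrite /rep; case: (cid (qex q)) => n hn /=.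
by rewrite hn.
Qed.

Lemma clsP (q : Q) : exists n, q = cls n.
Proof. by exists (rep q); rewrite repK. Qed.

Lemma E_rep n : E (rep (cls n)) n.
Proof. by apply/cls_eq; rewrite repK. Qed.

Definition q0 : Q := cls 0.
Definition qadd (a b : Q) : Q := cls (rep a + rep b).
Definition qscale (r : R) (a : Q) : Q := cls (r *: rep a).

Lemma qaddE a b : qadd (cls a) (cls b) = cls (a + b).
Proof. by apply/cls_eq; apply: ED; apply: E_rep. Qed.
Lemma qscaleE r a : qscale r (cls a) = cls (r *: a).
Proof. by apply/cls_eq; apply: EZ; apply: E_rep. Qed.

Lemma qaddA : associative qadd.
Proof.
move=> a b c; case: (clsP a) => x ->; case: (clsP b) => y ->; case: (clsP c) => z ->.
by rewrite !qaddE addrA.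
Qed.
Lemma qaddC : commutative qadd.
Proof.
move=> a b; case: (clsP a) => x ->; case: (clsP b) => y ->.
by rewrite !qaddE addrC.
Qed.
Lemma qadd0 : left_id q0 qadd.
Proof. move=> a; case: (clsP a) => x ->; by rewrite /q0 qaddE add0r. Qed.

HB.instance Definition _ := GRing.isNmodule.Build Q qaddA qaddC qadd0.

Lemma qscaleA a b v : qscale a (qscale b v) = qscale (a * b) v.
Proof. case: (clsP v) => x ->; by rewrite !qscaleE scalerA. Qed.
Lemma qscale0 v : qscale 0 v = 0.
Proof. case: (clsP v) => x ->; by rewrite !qscaleE scale0r. Qed.
Lemma qscale1 : left_id 1 qscale.
Proof. move=> v; case: (clsP v) => x ->; by rewrite !qscaleE scale1r. Qed.
Lemma qscaleDr : right_distributive qscale qadd.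
Proof.
move=> r a b; case: (clsP a) => x ->; case: (clsP b) => y ->.
rewrite !qaddE !qscaleE; apply/cls_eq; rewrite scalerDr; apply: ED; apply: EZ; apply: Esym; exact: E_rep.
Qed.
Lemma qscaleDl v : {morph qscale^~ v: a b / a + b >-> qadd a b}.
Proof. move=> a b; case: (clsP v) => x ->; by rewrite !qscaleE qaddE scalerDl. Qed.

HB.instance Definition _ := GRing.Nmodule_isLSemiModule.Build R Q
  qscaleA qscale0 qscale1 qscaleDr qscaleDl.

Lemma cls_hom : is_hom cls.
Proof.
split => //.
  by move=> x y; symmetry; exact: qaddE.
by move=> r x; symmetry; exact: qscaleE.
Qed.

Lemma cls0 n : cls n = 0 <-> E n 0.
Proof. exact: cls_eq. Qed.
End Quot.

Section Main.
Variable R : comPzSemiRingType.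
Implicit Types L M N X : lSemiModType R.

Lemma hom0 M N (f : M -> N) : is_hom f -> f 0 = 0.
Proof. by case. Qed.
Lemma homD M N (f : M -> N) : is_hom f -> forall x y, f (x + y) = f x + f y.
Proof. by case. Qed.
Lemma homZ M N (f : M -> N) : is_hom f -> forall (r : R) x, f (r *: x) = r *: f x.
Proof. by case. Qed.

Lemma zmap_hom M N : is_hom (@zmap R M N).
Proof. by split => //= [x y|r x]; rewrite /zmap ?addr0 ?scaler0. Qed.

Lemma id_hom M : is_hom (@id M).
Proof. by []. Qed.

Lemma comp_hom M N X (f : M -> N) (g : N -> X) : is_hom f -> is_hom g -> is_hom (g \o f).
Proof.
move=> hf hg; split => /= [|x y|r x]; first by rewrite !hom0.
  by rewrite !(homD hf) (homD hg).
by rewrite (homZ hf) (homZ hg).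
Qed.

Definition subtr M N (f : M -> N) := forall n a b, n + f a = f b -> exists c, n = f c.
Definition NMc M N (f : M -> N) := [/\ is_hom f, injective f & subtr f].
Definition fiberc M N (f : M -> N) := forall m m', f m = f m' ->
  exists k k', [/\ f k = 0, f k' = 0 & m + k = m' + k'].
Definition NEc M N (f : M -> N) := [/\ is_hom f, (forall n, exists m, f m = n) & fiberc f].

Definition bourne L M (g : L -> M) : M -> M -> Prop :=
  fun m m' => exists a b, m + g a = m' + g b.

Lemma bourne_congr L M (g : L -> M) : is_hom g -> congr (bourne g).
Proof.
move=> hg; split.
- by move=> x; exists 0, 0.
- by move=> x y [a [b h]]; exists b, a.
- move=> x y z [a [b h1]] [c [d h2]]; exists (a + c), (d + b).
  by rewrite !(homD hg) (addrA x) h1 -(addrA y) (addrC (g b)) (addrA y) h2 -(addrA z).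
- move=> x y x' y' [a [b h1]] [c [d h2]]; exists (a + c), (b + d).
  by rewrite !(homD hg) addrACA h1 h2 addrACA.
- move=> r x y [a [b h]]; exists (r *: a), (r *: b).
  by rewrite !(homZ hg) -!scalerDr h.
Qed.

Lemma bourne0 L M (g : L -> M) (hg : is_hom g) a :
  cls (bourne_congr hg) (g a) = 0.
Proof. apply/cls_eq; exists 0, a; by rewrite (hom0 hg) addr0 add0r. Qed.

Lemma bourne0E L M (g : L -> M) (hg : is_hom g) m :
  cls (bourne_congr hg) m = 0 -> exists a b, m + g a = g b.
Proof. by move/cls_eq => [a [b h]]; exists a, b; rewrite h add0r. Qed.

Lemma cls_homB L M (g : L -> M) (hg : is_hom g) : is_hom (cls (bourne_congr hg)).
Proof. exact: cls_hom. Qed.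

End Main.

Section Main2.
Variable R : comPzSemiRingType.
Implicit Types L M N X : lSemiModType R.

Definition RR : lSemiModType R := GRing.regular R.

Lemma line_hom M (x : M) : is_hom (fun r : RR => (r : R) *: x).
Proof.
split => [|r s|r s]; first exact: scale0r.
  exact: scalerDl.
by rewrite -scalerA.
Qed.

Lemma lift X M N (f : M -> N) (h : X -> N) : is_hom f -> injective f -> is_hom h ->
  (forall x, exists c, h x = f c) ->
  exists u : X -> M, [/\ is_hom u, (forall x, f (u x) = h x) &
      forall v : X -> M, is_hom v -> (forall x, f (v x) = h x) -> v =1 u].
Proof.
move=> hf fi hh ex.
pose u x := proj1_sig (cid (ex x)).
have fu x : f (u x) = h x by rewrite /u; case: (cid (ex x)) => c /= ->.
exists u; split => //.
  split => [|x y|r x]; apply: fi; rewrite ?(hom0 hf) ?(homD hf) ?(homZ hf) !fu.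
  - exact: hom0.
  - exact: homD.
  - exact: homZ.
by move=> v hv fv x; apply: fi; rewrite fv fu.
Qed.

Lemma factor M N X (f : M -> N) (h : M -> X) : is_hom f -> is_hom h ->
  (forall n, exists m, f m = n) -> fiberc f -> (forall k, f k = 0 -> h k = 0) ->
  exists u : N -> X, [/\ is_hom u, (forall m, u (f m) = h m) &
      forall v : N -> X, is_hom v -> (forall m, v (f m) = h m) -> v =1 u].
Proof.
move=> hf hh sf ff hk.
have wd m m' : f m = f m' -> h m = h m'.
  move/ff => [k [k' [fk fk' e]]].
  by rewrite -[h m]addr0 -(hk _ fk) -(homD hh) e (homD hh) (hk _ fk') addr0.
pose u n := h (proj1_sig (cid (sf n))).
have fu n : f (proj1_sig (cid (sf n))) = n by case: (cid (sf n)).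
have uf m : u (f m) = h m by apply: wd; rewrite fu.
exists u; split => //.
  split => [|x y|r x].
  - by rewrite -(hom0 hf) uf (hom0 hh).
  - by rewrite /u (wd _ (proj1_sig (cid (sf x)) + proj1_sig (cid (sf y)))) ?(homD hh) // (homD hf) !fu.
  - by rewrite /u (wd _ (r *: proj1_sig (cid (sf x)))) ?(homZ hh) // (homZ hf) !fu.
move=> v hv fv n; case: (sf n) => m <-; by rewrite fv uf.
Qed.

End Main2.

Section Main3.
Variable R : comPzSemiRingType.
Implicit Types L M N X : lSemiModType R.

Lemma ker_closed M N (g : M -> N) : is_hom g -> closedP (fun m => g m = 0).
Proof.
move=> hg; split; first exact: hom0.
  by move=> x y hx hy; rewrite (homD hg) hx hy addr0.
by move=> r x hx; rewrite (homZ hg) hx scaler0.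
Qed.

Lemma im_closed M N (f : M -> N) : is_hom f -> closedP (fun n => exists m, f m = n).
Proof.
move=> hf; split; first by exists 0; exact: hom0.
  by move=> x y [a <-] [b <-]; exists (a + b); rewrite (homD hf).
by move=> r x [a <-]; exists (r *: a); rewrite (homZ hf).
Qed.

Lemma NM_char M N (f : M -> N) : normal_mono f <-> NMc f.
Proof.
split.
  move=> [L [g [hf [hg [gf univ]]]]].
  split => //.
    move=> x y fxy.
    have z0 : forall r : RR R, g ((r : R) *: f x) = 0.
      by move=> r; rewrite (homZ hg) gf scaler0.
    have [u [hu fu uu]] := univ (RR R) _ (line_hom (f x)) z0.
    have e1 := uu _ (line_hom x) (fun r => homZ hf r x).
    have e2 : (fun r : RR R => (r : R) *: y) =1 u.
      apply: uu => [|r]; first exact: line_hom.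
      by rewrite (homZ hf) fxy.
    by move: (e1 1) (e2 1); rewrite /= !scale1r => -> ->.
  move=> n a b e.
  have gn : g n = 0.
    by have := congr1 g e; rewrite (homD hg) !gf addr0.
  pose K := subm (ker_closed hg).
  have [u [hu fu uu]] := univ K (@sv _ _ _ (ker_closed hg)) (sv_hom _) (fun k => sp k).
  by exists (u (SubM (ker_closed hg) gn)); rewrite fu.
move=> [hf fi st].
pose hc := bourne_congr hf.
exists (quotm hc), (cls hc); split => //; split; first exact: cls_hom.
split; first by move=> x; exact: bourne0.
move=> X h hh hz.
apply: lift => // x.
have [a [b e]] := bourne0E (hz x).
exact: st e.
Qed.

Lemma NE_char M N (f : M -> N) : normal_epi f <-> NEc f.
Proof.
split.
  move=> [L [g [hf [hg [fg univ]]]]].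
  have sur : forall n, exists m, f m = n.
    have hc := im_closed hf.
    pose S := subm hc.
    pose h m : S := SubM hc (ex_intro (fun m' => f m' = f m) m erefl).
    have hh : is_hom h.
      split => [|x y|r x]; apply: sv_inj => /=; first exact: hom0.
        exact: homD.
      exact: homZ.
    have hz : forall x, h (g x) = 0 by move=> x; apply: sv_inj; exact: fg.
    have [u [hu fu uu]] := univ S h hh hz.
    have [u0 [hu0 fu0 uu0]] := univ N f hf fg.
    have e1 := uu0 _ (id_hom N) (fun x => erefl).
    have e2 : (@sv _ _ _ hc \o u) =1 u0.
      by apply: uu0 => [|x]; [exact: comp_hom hu (sv_hom hc) | rewrite /= fu].
    move=> n; have := sp (u n); have e := e2 n; have e' := e1 n; rewrite /= in e e'.
    by rewrite /= e -e'.
  split => // m m' e.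
  pose hc := bourne_congr hg.
  have [u [hu fu uu]] := univ _ (cls hc) (cls_hom hc) (fun x => bourne0 hg x).
  have : cls hc m = cls hc m' by rewrite -!fu e.
  move/cls_eq => [a [b e2]].
  by exists (g a), (g b); rewrite !fg.
move=> [hf sf ff].
have hc := ker_closed hf.
exists (subm hc), (@sv _ _ _ hc); split => //; split; first exact: sv_hom.
split; first by move=> x; exact: (sp x).
move=> X h hh hz.
apply: (factor hf hh sf ff) => k fk.
exact: (hz (SubM hc fk)).
Qed.

End Main3.

Section Main4.
Variable R : comPzSemiRingType.
Implicit Types L M N X : lSemiModType R.

Section Square.
Variables (A B A' B' : lSemiModType R)
  (i : A -> B) (j : A -> A') (i' : A' -> B') (j' : B -> B').
Hypotheses (hi : is_hom i) (hj : is_hom j) (hi' : is_hom i') (hj' : is_hom j')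
  (com : commutes i j i' j').

Definition P1 := forall b a', j' b = i' a' -> exists a, i a = b.

Lemma pb_P1 : is_pullback i j i' j' -> P1.
Proof.
move=> pb b a' e.
have c : forall r : RR R, j' ((r : R) *: b) = i' ((r : R) *: a').
  by move=> r; rewrite (homZ hj') (homZ hi') e.
have [u [hu iu ju uu]] := pb _ _ _ (line_hom b) (line_hom a') c.
by exists (u 1); rewrite iu /= scale1r.
Qed.

Lemma P1_pb : injective i -> injective i' -> P1 -> is_pullback i j i' j'.
Proof.
move=> ii ii' p1 X p q hp hq e.
have ex : forall x, exists c, p x = i c.
  by move=> x; have [a <-] := p1 _ _ (e x); exists a.
have [u [hu iu uu]] := lift hi ii hp ex.
exists u; split => //.
  by move=> x; apply: ii'; rewrite -com iu e.
by move=> v hv iv _; apply: uu.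
Qed.

Lemma P1_po : injective i' -> (forall a', exists a, j a = a') -> NEc j' -> P1 ->
  is_pushout i j i' j'.
Proof.
move=> ii' sj [_ sj' fj'] p1 X p q hp hq e.
have hk : forall k, j' k = 0 -> p k = 0.
  move=> k jk.
  have [a ia] := p1 k 0 (etrans jk (esym (hom0 hi'))).
  have ja : j a = 0.
    by apply: ii'; rewrite -com ia jk (hom0 hi').
  by rewrite -ia e ja (hom0 hq).
have [u [hu uj uu]] := factor hj' hp sj' fj' hk.
exists u; split => //.
  by move=> a'; have [a <-] := sj a'; rewrite -com uj e.
by move=> v hv vj _; apply: uu.
Qed.

Lemma po_P1 : subtr i -> is_pushout i j i' j' -> P1.
Proof.
move=> st po b a' e.
pose hc := bourne_congr hi.
have c : forall a, cls hc (i a) = zmap (quotm hc) (j a) by move=> a; exact: bourne0.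
have [u [hu uj ui uu]] := po _ _ _ (cls_hom hc) (@zmap_hom R A' (quotm hc)) c.
have : cls hc b = 0 by rewrite -uj e ui.
move/bourne0E => [a1 [a2 e2]].
by have [c' ->] := st _ _ _ e2; exists c'.
Qed.

End Square.
End Main4.

Section Main5.
Variable R : comPzSemiRingType.
Implicit Types L M N X : lSemiModType R.

Lemma part4 (A' B B' : lSemiModType R) (i' : A' -> B') (j' : B -> B') :
  NMc i' -> NEc j' ->
  exists (A : lSemiModType R) (i : A -> B) (j : A -> A'),
    [/\ NMc i, NEc j, commutes i j i' j',
        is_pullback i j i' j' & is_pushout i j i' j'].
Proof.
move=> [hi' ii' sti'] [hj' sj' fj'].
have hc : closedP (fun b => exists a', j' b = i' a').
  split; first by exists 0; rewrite !hom0.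
    by move=> x y [a1 e1] [a2 e2]; exists (a1 + a2); rewrite !(homD hj') (homD hi') e1 e2.
  by move=> r x [a e]; exists (r *: a); rewrite (homZ hj') (homZ hi') e.
pose i := @sv _ _ _ hc.
pose j (s : subm hc) := proj1_sig (cid (sp s)).
have js s : j' (i s) = i' (j s) by rewrite /j /i; case: (cid (sp s)).
have hi : is_hom i by exact: sv_hom.
have hj : is_hom j.
  split => [|x y|r x]; apply: ii'; rewrite -?js.
  - by rewrite (hom0 hi') (hom0 hj').
  - by rewrite (homD hi') -!js (homD hj').
  - by rewrite (homZ hi') -!js (homZ hj').
have p1 : P1 i i' j'.
  by move=> b a' e; exists (SubM hc (ex_intro _ a' e)).
have sj : forall a', exists a, j a = a'.
  move=> a'; have [b e] := sj' (i' a').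
  by exists (SubM hc (ex_intro _ a' e)); apply: ii'; rewrite -js.
have NEj : NEc j.
  split => // x y e.
  have : j' (i x) = j' (i y) by rewrite !js e.
  move/fj' => [k [k' [fk fk' e2]]].
  have pk : j' k = i' 0 by rewrite fk (hom0 hi').
  have pk' : j' k' = i' 0 by rewrite fk' (hom0 hi').
  exists (SubM hc (ex_intro _ 0 pk)), (SubM hc (ex_intro _ 0 pk')); split.
  - by apply: ii'; rewrite -js (hom0 hi').
  - by apply: ii'; rewrite -js (hom0 hi').
  - by apply: sv_inj.
exists (subm hc), i, j; split => //.
- split => // [|n a b e]; first exact: sv_inj.
  have : j' n + i' (j a) = i' (j b) by rewrite -!js -(homD hj') e.
  move/sti' => [c ec].
  by exists (SubM hc (ex_intro _ c ec)).
- exact: P1_pb hi js (@sv_inj _ _ _ hc) ii' p1.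
- exact: P1_po hi' hj' js ii' sj (And3 hj' sj' fj') p1.
Qed.

End Main5.

Section Main6.
Variable R : comPzSemiRingType.
Implicit Types L M N X : lSemiModType R.

Lemma part5 (A B A' : lSemiModType R) (i : A -> B) (j : A -> A') :
  NMc i -> NEc j ->
  exists (B' : lSemiModType R) (i' : A' -> B') (j' : B -> B'),
    [/\ NMc i', NEc j', commutes i j i' j',
        is_pullback i j i' j' & is_pushout i j i' j'].
Proof.
move=> [hi ii sti] [hj sj fj].
have kc := ker_closed hj.
pose ik := i \o @sv _ _ _ kc.
have hik : is_hom ik by exact: comp_hom (sv_hom kc) hi.
pose hc := bourne_congr hik.
pose j' := cls hc.
have hj' : is_hom j' by exact: cls_hom.
pose pre a' := proj1_sig (cid (sj a')).
have jpre a' : j (pre a') = a' by rewrite /pre; case: (cid (sj a')).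
pose i' a' := j' (i (pre a')).
have key a : i' (j a) = j' (i a).
  apply/cls_eq.
  have [k [k' [fk fk' e]]] := fj _ _ (jpre (j a)).
  exists (SubM kc fk), (SubM kc fk') => /=.
  by rewrite -!(homD hi) e.
have hi' : is_hom i'.
  split => [|x y|r x].
  - by have := key 0; rewrite (hom0 hj) (hom0 hi) (hom0 hj').
  - have [a <-] := sj x; have [b <-] := sj y.
    by rewrite -(homD hj) !key (homD hi) (homD hj').
  - have [a <-] := sj x.
    by rewrite -(homZ hj) !key (homZ hi) (homZ hj').
have com : commutes i j i' j' by move=> a; rewrite key.
have ii' : injective i'.
  move=> x y; have [a <-] := sj x; have [b <-] := sj y.
  rewrite !key => /cls_eq [k1 [k2 /= e]].
  rewrite -!(homD hi) in e.
  have := congr1 j (ii _ _ e).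
  by rewrite !(homD hj) (sp k1) (sp k2) !addr0.
have p1 : P1 i i' j'.
  move=> b a' e; have [a ea] := sj a'.
  move: e; rewrite -ea key => /cls_eq [k1 [k2 /= e]].
  rewrite -(homD hi) in e.
  by have [c ->] := sti _ _ _ e; exists c.
have NEj' : NEc j'.
  split => // [n|b1 b2 /cls_eq [k1 [k2 e]]]; first by have [m ->] := clsP n; exists m.
  exists (ik k1), (ik k2); split => //; exact: bourne0.
exists (quotm hc), i', j'; split => //.
- split => // n x y e.
  have [c ec] := clsP n; have [a ea] := sj x; have [b eb] := sj y.
  move: e; rewrite ec -ea -eb !key -(homD hj') => /cls_eq [k1 [k2 /= e]].
  rewrite -addrA -!(homD hi) in e.
  have [z ez] := sti _ _ _ e.
  by exists (j z); rewrite key ez.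
- exact: P1_pb hi com ii ii' p1.
- exact: P1_po hi' hj' com ii' sj NEj' p1.
Qed.

End Main6.

Theorem theoremA (R : comPzSemiRingType) :
  proto_exact (@normal_mono R) (@normal_epi R).
Proof.
split.
  move=> Z A hz; split; [apply/NM_char | apply/NE_char].
  - split; first exact: zmap_hom.
      by move=> x y _; rewrite (hz x) (hz y).
    move=> n a b e; exists 0; rewrite /zmap in e *.
    by rewrite -e addr0.
  - split; first exact: zmap_hom.
      by move=> n; exists 0; rewrite (hz n).
    by move=> m m' _; exists m', m; rewrite /zmap addrC.
split.
  move=> M N f [hf [g [hg gf fg]]]; split; [apply/NM_char | apply/NE_char].
  - split => //; first exact: can_inj gf.
    by move=> n a b _; exists (g n).
  - split => //; first by move=> n; exists (g n).
    move=> m m' e; exists 0, 0; rewrite (hom0 hf); split => //.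
    by rewrite (can_inj gf e).
split.
  move=> M N P f g /NM_char [hf fi sf] /NM_char [hg gi sg]; apply/NM_char.
  split; first exact: comp_hom.
    exact: inj_comp.
  move=> n a b /= e.
  have [c ec] := sg _ _ _ e.
  have : g (c + f a) = g (f b) by rewrite (homD hg) -ec.
  move/gi/sf => [d ed].
  by exists d; rewrite ec ed.
split.
  move=> M N P f g /NE_char [hf sf ff] /NE_char [hg sg fg]; apply/NE_char.
  split; first exact: comp_hom.
    by move=> p; have [n <-] := sg p; have [m <-] := sf n; exists m.
  move=> m m' /= /fg [k [k' [gk gk' e]]].
  have [x ex] := sf k; have [x' ex'] := sf k'.
  have : f (m + x) = f (m' + x') by rewrite !(homD hf) ex ex'.
  move/ff => [y [y' [fy fy' e2]]].
  exists (x + y), (x' + y'); split => /=.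
  - by rewrite (homD hf) ex fy addr0.
  - by rewrite (homD hf) ex' fy' addr0.
  - by rewrite !addrA.
split.
  move=> A B A' B' i j i' j' /NM_char [hi ii si] /NM_char [hi' ii' si']
    /NE_char [hj sj fj] /NE_char [hj' sj' fj'] com.
  split => h.
  - exact: P1_po hi' hj' com ii' sj (And3 hj' sj' fj') (pb_P1 hi' hj' h).
  - exact: P1_pb hi com ii ii' (po_P1 hi si h).
split.
  move=> A' B B' i' j' /NM_char hi' /NE_char hj'.
  have [A [i [j [hi hj c pb po]]]] := part4 hi' hj'.
  by exists A, i, j; split => //; [apply/NM_char | apply/NE_char].
move=> A B A' i j /NM_char hi /NE_char hj.
have [B' [i' [j' [hi' hj' c pb po]]]] := part5 hi hj.
by exists B', i', j'; split => //; [apply/NM_char | apply/NE_char].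
Qed.
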